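(* For every integer $k\ge 0$, $$\sum_{n\ge k}B(n,k)\frac{x^n}{n!}=\tan^k x\,\sec x$$ as formal power series (equivalently, as analytic functions near $0$).
   Context: A labeled ballot path is a lattice path from $(0,0)$ with steps $u=(1,1)$, $d=(1,-1)$ never going below the $x$-axis, each step carrying an integer label between $0$ and its height, where the height of a step is the smaller $y$-coordinate of its endpoints. $B(n,k)$ is the number of labeled ballot paths from $(0,0)$ ending at $(n,k)$. *)

(* Defs.v *)
From mathcomp Require Import all_boot.
Set Implicit Arguments. Unset Strict Implicit. Unset Printing Implicit Defensive.

(* A labeled step: (true, l) is an up step u=(1,1), (false, l) is a down step
   d=(1,-1); l is its integer label. *)

Fixpoint lbp_valid (h : nat) (s : seq (bool * nat)) : bool :=
  match s with
  | [::] => true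
  | (true, l) :: s' => (l <= h) && lbp_valid h.+1 s'
  | (false, l) :: s' => (0 < h) && (l <= h.-1) && lbp_valid h.-1 s'
  end.

Fixpoint lbp_end (h : nat) (s : seq (bool * nat)) : nat :=
  match s with
  | [::] => h
  | (true, _) :: s' => lbp_end h.+1 s'
  | (false, _) :: s' => lbp_end h.-1 s'
  end.

(* A labeled path with n steps, labels stored in 'I_n.+1 (any valid label is
   at most the height, which is < n, so no valid path is lost). *)
Definition lbp_seq n (t : n.-tuple (bool * 'I_n.+1)) : seq (bool * nat) :=
  [seq (p.1, nat_of_ord p.2) | p <- t].

Definition B (n k : nat) : nat :=
  #|[set t : n.-tuple (bool * 'I_n.+1) |
       lbp_valid 0 (lbp_seq t) && (lbp_end 0 (lbp_seq t) == k)]|.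

(* Main.v *)
Require Import Defs.
From Stdlib Require Import Lia ArithRing.
From mathcomp Require all_boot.

Module CombPart.
From mathcomp Require Import all_boot.
Set Implicit Arguments. Unset Strict Implicit. Unset Printing Implicit Defensive.

Fixpoint Nc (n h k : nat) : nat :=
  match n with
  | 0 => (h == k : nat)
  | n'.+1 => h.+1 * Nc n' h.+1 k + h * Nc n' h.-1 k
  end.

Lemma NcS n h k : Nc n.+1 h k = h.+1 * Nc n h.+1 k + h * Nc n h.-1 k.
Proof. by []. Qed.

Lemma Nc_last n h k : Nc n.+1 h k = k * Nc n h k.-1 + k.+1 * Nc n h k.+1.
Proof.
elim: n h k => [|n IH] h k.
  rewrite /=. case: h => [|h]; case: k => [|k] /=; rewrite ?eqSS;
  repeat (case: eqP => ?); subst; rewrite ?muln0 ?muln1 ?addn0 ?add0n //=;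
  repeat match goal with H : _ = _ |- _ => move/eqP: H; rewrite ?eqSS => /eqP H end;
  try lia.
rewrite (NcS n.+1 h k) (IH h.+1) (IH h.-1) (NcS n h k.-1) (NcS n h k.+1).
set A := Nc n h.+1 k.-1. set B' := Nc n h.+1 k.+1. set C := Nc n h.-1 k.-1. set D := Nc n h.-1 k.+1.
rewrite -!multE -!plusE. ring.

Qed.

Definition seqm m (s : seq (bool * 'I_m)) : seq (bool*nat) := [seq (p.1, nat_of_ord p.2) | p <- s].
Definition okm m h k (s : seq (bool*'I_m)) : bool := lbp_valid h (seqm s) && (lbp_end h (seqm s) == k).

Lemma sum_tupleS (T : finType) n (F : n.+1.-tuple T -> nat) :
  \sum_(t : n.+1.-tuple T) F t = \sum_(x : T) \sum_(t : n.-tuple T) F [tuple of x :: t].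
Proof.
rewrite pair_big /=.
rewrite (reindex (fun p : T * n.-tuple T => [tuple of p.1 :: p.2])) //=.
exists (fun u : n.+1.-tuple T => (thead u, behead_tuple u)).
  by move=> [x t] _ /=; congr (_, _); apply: val_inj.
by move=> u _; rewrite [RHS]tuple_eta.
Qed.

Lemma sum_le m h : \sum_(l < m) (l <= h : nat) = minn m h.+1.
Proof.
elim: m => [|m IH]; first by rewrite big_ord0.
rewrite big_ord_recr /= IH.
case: (leqP m h) => H.
  rewrite /minn ltnS H addn1; case: ltnP => // H'; apply/eqP; rewrite eqSS eqn_leq H; exact H'.
rewrite addn0 (minn_idPr _) ?(minn_idPr _) //; exact: leqW.
Qed.

Lemma cnt m n h k : h + n <= m ->
  \sum_(t : n.-tuple (bool*'I_m)) okm h k t = Nc n h k.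
Proof.
elim: n h => [|n IH] h Hm.
  transitivity (\sum_(t : 0.-tuple (bool*'I_m)) (@okm m h k [tuple] : nat)).
    by apply: eq_bigr => t _; rewrite [t]tuple0.
  by rewrite sum_nat_const card_tuple expn0 mul1n.
rewrite sum_tupleS -(pair_big xpredT xpredT (fun b l => \sum_(t : n.-tuple (bool * 'I_m)) okm h k [tuple of (b,l) :: t])) /=.
rewrite big_bool /=.
have E1 : forall l : 'I_m, \sum_(t : n.-tuple (bool * 'I_m)) okm h k ((true,l) :: (t : seq _))
   = (l <= h) * Nc n h.+1 k.
  move=> l; rewrite -IH; last by rewrite addSnnS.
  rewrite big_distrr /=; apply: eq_bigr => t _.
  by rewrite /okm /= mulnb andbA.
have E2 : forall l : 'I_m, \sum_(t : n.-tuple (bool * 'I_m)) okm h k ((false,l) :: (t : seq _))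
   = ((0 < h) && (l <= h.-1)) * Nc n h.-1 k.
  move=> l; rewrite -IH; last by apply: (leq_trans _ Hm); rewrite addnS; apply: leqW; rewrite leq_add2r; exact: leq_pred.
  rewrite big_distrr /=; apply: eq_bigr => t _.
  by rewrite /okm /= mulnb andbA.
rewrite (eq_bigr _ (fun l _ => E1 l)) (eq_bigr _ (fun l _ => E2 l)) -!big_distrl /= sum_le.
have -> : minn m h.+1 = h.+1 by apply/minn_idPr; apply: leq_trans Hm; rewrite addnS ltnS leq_addr.
congr (_ + _); clear E1 E2; case: h Hm => [|h] Hm; first by rewrite big1.
congr (_ * _).
rewrite /= (eq_bigr (fun l : 'I_m => (l <= h : nat))) // sum_le.
apply/minn_idPr; apply: leq_trans Hm; rewrite addSn ltnS; exact: leq_addr.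
Qed.

Lemma B_Nc n k : B n k = Nc n 0 k.
Proof.
rewrite -(cnt k (m := n.+1)) // /B -sum1dep_card big_mkcond /=.
by apply: eq_bigr => t _; rewrite /okm /seqm /lbp_seq; case: (_ && _).
Qed.

Lemma B_rec n k : B n.+1 k = k * B n k.-1 + k.+1 * B n k.+1.
Proof. by rewrite !B_Nc Nc_last. Qed.

Lemma B_0 k : B 0 k = (k == 0 : nat).
Proof. by rewrite B_Nc /= eq_sym. Qed.

Lemma B_zero n k : n < k -> B n k = 0.
Proof.
elim: n k => [|n IH] k Hk; first by rewrite B_0; case: k Hk.
rewrite B_rec (IH k.+1) ?(IH k.-1) ?muln0 //.
- by case: k Hk => // k; rewrite ltnS.
- by apply/ltP; move/ltP: Hk; lia.
Qed.

Lemma B_bound n k : B n k <= 3 ^ n * n`!.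
Proof.
elim: n k => [|n IH] k; first by rewrite B_0; case: k.
case: (leqP k n.+1) => Hk; last by rewrite B_zero.
rewrite B_rec.
have H1 : k * B n k.-1 <= n.+1 * (3^n * n`!) := leq_mul Hk (IH _).
have H2 : k.+1 * B n k.+1 <= n.+1 * (3^n * n`!).
  case: (leqP k.+1 n) => H; first by apply: leq_mul (IH _); exact: leqW H.
  by rewrite B_zero // muln0.
apply: leq_trans (leq_add H1 H2) _.
rewrite expnS factS. set M := 3 ^ n. set F := n`!. rewrite -!multE -!plusE. apply/leP. nia.
Qed.

Lemma B_rec' n k : B (S n) k = (k * B n (Nat.pred k) + S k * B n (S k))%coq_nat.
Proof. by rewrite B_rec. Qed.

Lemma B_bound' n k : (B n k <= Nat.pow 3 n * Factorial.fact n)%coq_nat.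
Proof.
apply/leP; have -> : Nat.pow 3 n = expn 3 n by elim: n {k} => //= n ->; rewrite expnS. have -> : Factorial.fact n = n`!.
  by elim: n {k} => //= n IH; rewrite IH factS.
exact: B_bound.
Qed.

Lemma B_00 : B 0 0 = 1%N.
Proof. by rewrite B_0. Qed.
Lemma B_0S k : B 0 k.+1 = 0%N.
Proof. by rewrite B_0. Qed.

End CombPart.
Import CombPart.

From Stdlib Require Import Reals Arith Factorial Lra Lia.
Open Scope R_scope.

Lemma sum_shift (f : nat -> R) n :
  sum_f_R0 f (S n) = f 0%nat + sum_f_R0 (fun i => f (S i)) n.
Proof.
induction n as [|n IH].
- simpl. ring.
- rewrite tech5, IH, tech5. ring.
Qed.

Lemma fact_neq0 n : INR (fact n) <> 0.
Proof. apply INR_fact_neq_0. Qed.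

Definition conv (a c : nat -> R) (n : nat) : R :=
  sum_f_R0 (fun p => a p / INR (fact p) * (c (n - p)%nat / INR (fact (n - p)))) n.

Lemma conv_S a c n :
  INR (S n) * conv a c (S n) = conv (fun p => a (S p)) c n + conv a (fun p => c (S p)) n.
Proof.
unfold conv.
rewrite scal_sum.
set (t := fun p => a p / INR (fact p) * (c (S n - p)%nat / INR (fact (S n - p)))).
rewrite (sum_eq _ (fun p => t p * INR p + t p * INR (S n - p))).
2:{ intros i Hi. rewrite <- Rmult_plus_distr_l. rewrite <- plus_INR.
    unfold t. f_equal. f_equal. lia. }
rewrite sum_plus. f_equal.
- rewrite sum_shift. simpl (INR 0). rewrite Rmult_0_r, Rplus_0_l.
  apply sum_eq. intros i Hi. unfold t.
  replace (S n - S i)%nat with (n - i)%nat by lia.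
  replace (fact (S i)) with (S i * fact i)%nat by reflexivity.
  rewrite mult_INR; field; repeat split; first [apply fact_neq0 | apply not_0_INR; lia].
- rewrite tech5. unfold t at 2. rewrite Nat.sub_diag. simpl (INR 0). rewrite Rmult_0_r, Rplus_0_r.
  apply sum_eq. intros i Hi. unfold t.
  replace (S n - i)%nat with (S (n - i))%nat by lia.
  replace (fact (S (n - i))) with (S (n - i) * fact (n - i))%nat by reflexivity.
  rewrite mult_INR; field; repeat split; first [apply fact_neq0 | apply not_0_INR; lia].
Qed.

Lemma conv_ext a a' c c' n : (forall p, a p = a' p) -> (forall p, c p = c' p) ->
  conv a c n = conv a' c' n.
Proof. intros Ha Hc. unfold conv. apply sum_eq. intros i _. rewrite Ha, Hc. reflexivity. Qed.

Lemma conv_lin a f g u v n :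
  conv a (fun m => u * f m + v * g m) n = u * conv a f n + v * conv a g n.
Proof.
unfold conv.
rewrite (sum_eq _ (fun p => (a p / INR (fact p) * (f (n - p)%nat / INR (fact (n - p)))) * u
   + (a p / INR (fact p) * (g (n - p)%nat / INR (fact (n - p)))) * v)).
2:{ intros i _. field. split; apply fact_neq0. }
rewrite sum_plus, <- !scal_sum. ring.
Qed.

Lemma conv_opp a c n : conv (fun p => - a p) c n = - conv a c n.
Proof.
unfold conv.
rewrite (sum_eq _ (fun p => (a p / INR (fact p) * (c (n - p)%nat / INR (fact (n - p)))) * (-1))).
2:{ intros i _. field. split; apply fact_neq0. }
rewrite <- scal_sum. ring.
Qed.

Fixpoint csp (n:nat) : R*R :=
  match n with 0%nat => (1,0) | S m => (- snd (csp m), fst (csp m)) end.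
Definition cc n := fst (csp n).
Definition sc n := snd (csp n).
Definition b k n := INR (B n k).

Lemma b_rec k n : b k (S n) = INR k * b (pred k) n + INR (S k) * b (S k) n.
Proof. unfold b. rewrite B_rec', plus_INR, !mult_INR. reflexivity. Qed.

Definition delta n := match n with 0%nat => 1 | _ => 0 end.
Definition E k n := conv cc (b k) n - match k with 0%nat => delta n | S j => conv sc (b j) n end.

Lemma E_zero n : forall k, E k n = 0.
Proof.
induction n as [|n IH]; intros k.
- unfold E, conv. simpl. unfold b. destruct k as [|j].
  + rewrite B_00. unfold cc; simpl. field.
  + rewrite B_0S. unfold cc, sc; simpl. field.
- assert (HS : INR (S n) <> 0) by (apply not_0_INR; lia).
  apply (Rmult_eq_reg_l (INR (S n))); [|exact HS]. rewrite Rmult_0_r.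
  unfold E. rewrite Rmult_minus_distr_l, conv_S.
  rewrite (conv_ext (fun p => cc (S p)) (fun p => - sc p) (b k) (b k)); [| reflexivity | reflexivity].
  rewrite (conv_ext cc cc (fun p => b k (S p)) (fun m => INR k * b (pred k) m + INR (S k) * b (S k) m)); [| reflexivity | intro; apply b_rec].
  rewrite conv_opp, conv_lin.
  destruct k as [|j].
  + simpl (delta (S n)). rewrite Rmult_0_r.
    pose proof (IH 1%nat) as H1. unfold E in H1. simpl (INR 0). simpl (INR 1) in *.
    lra.
  + rewrite conv_S.
    rewrite (conv_ext (fun p => sc (S p)) cc (b j) (b j)); [| reflexivity | reflexivity].
    rewrite (conv_ext sc sc (fun p => b j (S p)) (fun m => INR j * b (pred j) m + INR (S j) * b (S j) m)); [| reflexivity | intro; apply b_rec].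
    rewrite conv_lin.
    pose proof (IH (S (S j))) as H2. unfold E in H2.
    assert (H1 : INR j * conv cc (b j) n = INR j * conv sc (b (pred j)) n).
    { destruct j as [|i]. simpl. ring. pose proof (IH (S i)) as H3. unfold E in H3. simpl pred.
      f_equal. lra. }
    rewrite !S_INR in *.
    transitivity (INR j * conv cc (b j) n - INR j * conv sc (b (pred j)) n
       + (INR j + 1 + 1) * (conv cc (b (S (S j))) n - conv sc (b (S j)) n)).
    2: (rewrite H1, H2; ring). change (conv (fun p => sc (S p)) (b j) n) with (conv cc (b j) n). ring.
Qed.

Lemma Un_cv_ext (u v : nat -> R) l : (forall n, u n = v n) -> Un_cv u l -> Un_cv v l.
Proof. intros H Hu eps He. destruct (Hu eps He) as [N HN]. exists N. intros n Hn. rewrite <- H. auto. Qed.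

Lemma pow_decr (q : R) m d : 0 <= q <= 1 -> q ^ (m + d) <= q ^ m.
Proof.
intros Hq. rewrite pow_add. rewrite <- (Rmult_1_r (q ^ m)) at 2.
apply Rmult_le_compat_l. apply pow_le; lra.
rewrite <- (pow1 d). apply pow_incr. lra.
Qed.

Lemma pow_decr' (q : R) m n : 0 <= q <= 1 -> (m <= n)%nat -> q ^ n <= q ^ m.
Proof. intros Hq H. replace n with (m + (n - m))%nat by lia. apply pow_decr; auto. Qed.

Lemma INR_le_pow2 n : INR n <= 2 ^ n.
Proof.
induction n as [|n IH]. simpl; lra.
rewrite S_INR. simpl. assert (1 <= 2 ^ n) by (apply pow_R1_Rle; lra). lra.
Qed.

Lemma cprod (A Bn : nat -> R) la lb :
  (forall n, Rabs (A n) <= (/8)^n) -> (forall n, Rabs (Bn n) <= (/8)^n) ->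
  Un_cv (sum_f_R0 A) la -> Un_cv (sum_f_R0 Bn) lb ->
  Un_cv (sum_f_R0 (fun n => sum_f_R0 (fun p => A p * Bn (n - p)%nat) n)) (la * lb).
Proof.
intros HA HB CA CB.
set (SC := sum_f_R0 (fun n => sum_f_R0 (fun p => A p * Bn (n - p)%nat) n)).
assert (Hq : 0 <= /8 <= 1) by lra.
assert (Hbd : forall N, Rabs (sum_f_R0 A N * sum_f_R0 Bn N - SC N) <= (/2)^N).
{ intros N. destruct N as [|M].
  - unfold SC. simpl. rewrite Rminus_diag, Rabs_R0. lra.
  - unfold SC. rewrite (cauchy_finite A Bn (S M)) by lia.
    replace (pred (S M)) with M by reflexivity.
    match goal with |- Rabs (?a + ?r - ?a) <= _ => replace (a + r - a) with r by ring end.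
    eapply Rle_trans. apply sum_f_R0_triangle.
    eapply Rle_trans. apply (sum_Rle _ (fun _ => INR (S M) * (/8)^(S (S M)))).
    { intros k Hk. eapply Rle_trans. apply sum_f_R0_triangle.
      eapply Rle_trans. apply (sum_Rle _ (fun _ => (/8)^(S (S M)))).
      { intros l Hl. rewrite Rabs_mult.
        eapply Rle_trans. apply Rmult_le_compat; [apply Rabs_pos|apply Rabs_pos|apply HA|apply HB].
        rewrite <- pow_add. apply pow_decr'. exact Hq. lia. }
      rewrite sum_cte. rewrite Rmult_comm. apply Rmult_le_compat_r. apply pow_le; lra.
      apply le_INR. lia. }
    rewrite sum_cte.
    assert (H1 : INR (S M) <= 2 ^ (S M)) by apply INR_le_pow2.
    assert (H2 : (/8)^(S (S M)) <= (/8)^(S M)) by (apply pow_decr'; [exact Hq | lia]).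
    assert (H3 : 0 <= INR (S M)) by apply pos_INR.
    assert (H4 : 0 <= (/8)^(S (S M))) by (apply pow_le; lra).
    replace ((/2)^(S M)) with (2^(S M) * (2^(S M) * (/8)^(S M))).
    2:{ rewrite <- Rpow_mult_distr, <- Rpow_mult_distr. f_equal. field. }
    rewrite Rmult_comm.
    apply Rmult_le_compat; auto. apply Rmult_le_pos; auto.
    apply Rmult_le_compat; auto. }
assert (Hr : Un_cv (fun N => sum_f_R0 A N * sum_f_R0 Bn N - SC N) 0).
{ intros eps He. destruct (pow_lt_1_zero (/2)) with (y := eps) as [N HN].
  rewrite Rabs_right; lra. exact He.
  exists N. intros n Hn. unfold R_dist. rewrite Rminus_0_r.
  eapply Rle_lt_trans. apply Hbd. specialize (HN n Hn). rewrite Rabs_right in HN. exact HN.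
  apply Rle_ge, pow_le; lra. }
pose proof (CV_minus _ _ _ _ (CV_mult _ _ _ _ CA CB) Hr) as H.
rewrite Rminus_0_r in H.
refine (Un_cv_ext _ _ _ _ H). intros n. simpl. fold SC. ring.
Qed.

Lemma cv_of_bound (A : nat -> R) : (forall n, Rabs (A n) <= (/8)^n) ->
  exists l, Un_cv (sum_f_R0 A) l.
Proof.
intros HA.
assert (G : { l | Un_cv (fun N => sum_f_R0 (fun n => (/8)^n) N) l }).
{ exists (/ (1 - /8)). pose proof (GP_infinite (/8)) as G.
  assert (Rabs (/8) < 1) by (rewrite Rabs_right; lra).
  specialize (G H). unfold Pser, infinite_sum in G.
  intros eps He. destruct (G eps He) as [N HN]. exists N. intros n Hn.
  specialize (HN n Hn). rewrite (sum_eq _ (fun n => 1 * (/8)^n)). exact HN.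
  intros; ring. }
destruct (Rseries_CV_comp (fun n => Rabs (A n)) _ (fun n => conj (Rabs_pos _) (HA n)) G) as [l Hl].
destruct (cv_cauchy_2 A (cauchy_abs A (cv_cauchy_1 _ (exist _ l Hl)))) as [l' Hl'].
exists l'. exact Hl'.
Qed.

Lemma cspS m : csp (S m) = (- snd (csp m), fst (csp m)).
Proof. reflexivity. Qed.

Lemma csp_par N : csp (2 * N) = ((-1)^N, 0) /\ csp (S (2 * N)) = (0, (-1)^N).
Proof.
induction N as [|N [IH1 IH2]].
- simpl. split; f_equal; ring.
- replace (2 * S N)%nat with (S (S (2 * N))) by lia.
  assert (H : csp (S (S (2 * N))) = ((-1)^(S N), 0)).
  { rewrite (cspS (S (2 * N))), IH2. simpl. f_equal; ring. }
  split. exact H. rewrite (cspS (S (S (2 * N)))), H. simpl. f_equal; ring.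
Qed.

Lemma cv_even_odd (u : nat -> R) l :
  Un_cv (fun N => u (2 * N)%nat) l -> Un_cv (fun N => u (S (2 * N))) l -> Un_cv u l.
Proof.
intros H1 H2 eps He. destruct (H1 eps He) as [N1 HN1]. destruct (H2 eps He) as [N2 HN2].
exists (2 * (N1 + N2) + 1)%nat. intros n Hn.
destruct (Nat.Even_or_Odd n) as [[m Hm]|[m Hm]]; subst n.
- apply HN1. lia.
- replace (2 * m + 1)%nat with (S (2 * m)) by lia. apply HN2. lia.
Qed.

Definition tc x n := cc n * x ^ n / INR (fact n).
Definition ts x n := sc n * x ^ n / INR (fact n).

Lemma cos_ser x : Un_cv (sum_f_R0 (tc x)) (cos x).
Proof.
assert (HE : forall N, sum_f_R0 (tc x) (2 * N) = A1 x N /\ sum_f_R0 (tc x) (S (2 * N)) = A1 x N).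
{ induction N as [|N [IH1 IH2]].
  - unfold A1, tc, cc. simpl. split; field.
  - assert (H : sum_f_R0 (tc x) (2 * S N) = A1 x (S N)).
    { replace (2 * S N)%nat with (S (S (2 * N))) by lia.
      change (sum_f_R0 (tc x) (S (2 * N)) + tc x (S (S (2 * N))) = A1 x N + (-1) ^ (S N) / INR (fact (2 * S N)) * x ^ (2 * S N)).
      rewrite IH2. f_equal. unfold tc, cc.
      replace (S (S (2 * N))) with (2 * S N)%nat by lia.
      rewrite (proj1 (csp_par (S N))). simpl fst. change ((-1) ^ S N) with (-1 * (-1) ^ N). unfold Rdiv. ring. }
    split. exact H.
    change (sum_f_R0 (tc x) (2 * S N) + tc x (S (2 * S N)) = A1 x (S N)).
    rewrite H. unfold tc, cc. rewrite (proj2 (csp_par (S N))). simpl fst. field. apply fact_neq0. }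
apply cv_even_odd.
- refine (Un_cv_ext _ _ _ _ (A1_cvg x)). intros; symmetry; apply HE.
- refine (Un_cv_ext _ _ _ _ (A1_cvg x)). intros; symmetry; apply HE.
Qed.

Lemma sin_ser x : Un_cv (sum_f_R0 (ts x)) (sin x).
Proof.
assert (HO : forall N, sum_f_R0 (ts x) (S (2 * N)) = B1 x N /\ sum_f_R0 (ts x) (2 * S N) = B1 x N).
{ induction N as [|N [IH1 IH2]].
  - unfold B1, ts, sc. simpl. split; field.
  - assert (H : sum_f_R0 (ts x) (S (2 * S N)) = B1 x (S N)).
    { change (sum_f_R0 (ts x) (2 * S N) + ts x (S (2 * S N)) = B1 x N + (-1) ^ (S N) / INR (fact (2 * S N + 1)) * x ^ (2 * S N + 1)).
      rewrite IH2. f_equal. unfold ts, sc.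
      replace (2 * S N + 1)%nat with (S (2 * S N)) by lia.
      rewrite (proj2 (csp_par (S N))). simpl snd. change ((-1) ^ S N) with (-1 * (-1) ^ N). unfold Rdiv. ring. }
    split. exact H.
    replace (2 * S (S N))%nat with (S (S (2 * S N))) by lia.
    change (sum_f_R0 (ts x) (S (2 * S N)) + ts x (S (S (2 * S N))) = B1 x (S N)).
    rewrite H. unfold ts, sc.
    replace (S (S (2 * S N))) with (2 * S (S N))%nat by lia.
    rewrite (proj1 (csp_par (S (S N)))). simpl snd. field. apply fact_neq0. }
apply cv_even_odd.
- intros eps He. destruct (B1_cvg x eps He) as [N HN]. exists (S N). intros n Hn.
  destruct n as [|m]. lia. rewrite (proj2 (HO m)). apply HN. lia.
- refine (Un_cv_ext _ _ _ _ (B1_cvg x)). intros; symmetry; apply HO.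
Qed.

Definition tb x j n := INR (B n j) * x ^ n / INR (fact n).

Lemma csp_bound n : Rabs (fst (csp n)) <= 1 /\ Rabs (snd (csp n)) <= 1.
Proof.
induction n as [|n [IH1 IH2]].
- simpl. rewrite Rabs_R1, Rabs_R0. lra.
- rewrite cspS. simpl. rewrite Rabs_Ropp. auto.
Qed.

Lemma fact_ge1 n : 1 <= INR (fact n).
Proof. apply (le_INR 1). pose proof (lt_O_fact n). lia. Qed.

Lemma coef_bound (c : R) x n : Rabs c <= 1 -> Rabs x <= /24 ->
  Rabs (c * x ^ n / INR (fact n)) <= (/8)^n.
Proof.
intros Hc Hx. unfold Rdiv. rewrite !Rabs_mult, <- RPow_abs.
pose proof (fact_ge1 n) as Hf.
rewrite (Rabs_pos_eq (/ INR (fact n))) by (apply Rlt_le, Rinv_0_lt_compat; lra).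
assert (Hi : / INR (fact n) <= 1).
{ rewrite <- Rinv_1. apply Rinv_le_contravar; lra. }
apply Rle_trans with (1 * Rabs x ^ n * 1).
- apply Rmult_le_compat; try apply Rmult_le_pos; try apply Rabs_pos; try apply pow_le; try apply Rabs_pos;
  try (apply Rlt_le, Rinv_0_lt_compat; lra); auto.
  apply Rmult_le_compat; try apply Rabs_pos; try apply pow_le; try apply Rabs_pos; lra.
- rewrite Rmult_1_l, Rmult_1_r. apply pow_incr. split. apply Rabs_pos. lra.
Qed.

Lemma tb_bound x j n : Rabs x <= /24 -> Rabs (tb x j n) <= (/8)^n.
Proof.
intros Hx. unfold tb.
pose proof (fact_ge1 n) as Hf.
assert (HB : INR (B n j) <= 3 ^ n * INR (fact n)).
{ pose proof (le_INR _ _ (B_bound' n j)) as H. rewrite mult_INR, pow_INR in H.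
  replace (INR 3) with 3 in H by (simpl; ring). exact H. }
unfold Rdiv. rewrite !Rabs_mult, <- RPow_abs.
rewrite (Rabs_pos_eq (/ INR (fact n))) by (apply Rlt_le, Rinv_0_lt_compat; lra).
rewrite (Rabs_pos_eq (INR (B n j))) by apply pos_INR.
apply Rle_trans with (3 ^ n * INR (fact n) * Rabs x ^ n * / INR (fact n)).
- apply Rmult_le_compat_r. apply Rlt_le, Rinv_0_lt_compat; lra.
  apply Rmult_le_compat_r. apply pow_le, Rabs_pos. exact HB.
- replace (3 ^ n * INR (fact n) * Rabs x ^ n * / INR (fact n)) with ((3 * Rabs x) ^ n).
  + apply pow_incr. split. pose proof (Rabs_pos x); lra. lra.
  + rewrite Rpow_mult_distr. field. lra.
Qed.

Lemma prod_c x j n :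
  sum_f_R0 (fun p => tc x p * tb x j (n - p)%nat) n = x ^ n * conv cc (b j) n.
Proof.
unfold conv. rewrite scal_sum. apply sum_eq. intros p Hp. unfold tc, tb, b.
replace (x ^ n) with (x ^ p * x ^ (n - p)) by (rewrite <- pow_add; f_equal; lia).
field. split; apply fact_neq0.
Qed.

Lemma prod_s x j n :
  sum_f_R0 (fun p => ts x p * tb x j (n - p)%nat) n = x ^ n * conv sc (b j) n.
Proof.
unfold conv. rewrite scal_sum. apply sum_eq. intros p Hp. unfold ts, tb, b.
replace (x ^ n) with (x ^ p * x ^ (n - p)) by (rewrite <- pow_add; f_equal; lia).
field. split; apply fact_neq0.
Qed.

Lemma main_x x : Rabs x <= /24 -> cos x <> 0 ->
  forall j l, Un_cv (sum_f_R0 (tb x j)) l -> l = tan x ^ j * / cos x.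
Proof.
intros Hx Hc j. induction j as [|i IH]; intros l Hl.
- pose proof (cprod (tc x) (tb x 0) _ _ (fun n => coef_bound _ x n (proj1 (csp_bound n)) Hx)
     (fun n => tb_bound x 0 n Hx) (cos_ser x) Hl) as H.
  assert (H1 : Un_cv (sum_f_R0 (fun n => sum_f_R0 (fun p => tc x p * tb x 0 (n - p)%nat) n)) 1).
  { intros eps He. exists 0%nat. intros n _. unfold R_dist.
    replace (sum_f_R0 (fun n => sum_f_R0 (fun p => tc x p * tb x 0 (n - p)%nat) n) n) with 1.
    rewrite Rminus_diag, Rabs_R0. exact He.
    induction n as [|n IHn].
    - simpl. unfold tc, tb, cc. simpl. rewrite B_00. simpl. field.
    - rewrite tech5, <- IHn, prod_c.
      pose proof (E_zero (S n) 0) as E0. unfold E in E0. simpl delta in E0.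
      rewrite Rminus_0_r in E0. rewrite E0. ring. }
  pose proof (UL_sequence _ _ _ H H1) as H2. simpl. field_simplify; auto.
  apply (Rmult_eq_reg_l (cos x)); auto. rewrite H2. field. auto.
- destruct (cv_of_bound (tb x i) (fun n => tb_bound x i n Hx)) as [l' Hl'].
  pose proof (IH l' Hl') as E'.
  pose proof (cprod (tc x) (tb x (S i)) _ _ (fun n => coef_bound _ x n (proj1 (csp_bound n)) Hx)
     (fun n => tb_bound x (S i) n Hx) (cos_ser x) Hl) as H.
  pose proof (cprod (ts x) (tb x i) _ _ (fun n => coef_bound _ x n (proj2 (csp_bound n)) Hx)
     (fun n => tb_bound x i n Hx) (sin_ser x) Hl') as H'.
  assert (Heq : cos x * l = sin x * l').
  { apply (UL_sequence _ _ _ H). refine (Un_cv_ext _ _ _ _ H'). intros N.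
    apply sum_eq. intros n _. rewrite prod_c, prod_s.
    pose proof (E_zero n (S i)) as E1. unfold E in E1. f_equal. lra. }
  rewrite E' in Heq. unfold tan in *. simpl.
  apply (Rmult_eq_reg_l (cos x)); auto. rewrite Heq. field. auto.
Qed.

Theorem mainTheorem5 (k : nat) :
  exists r : R, 0 < r /\
    forall x : R, Rabs x < r ->
      infinite_sum (fun n : nat => INR (B n k) * x ^ n / INR (fact n))
                   (tan x ^ k * / cos x).
Proof.
exists (/24). split. lra.
intros x Hx.
assert (Hx' : Rabs x <= /24) by lra.
assert (Hc : cos x <> 0).
{ apply Rgt_not_eq. apply cos_gt_0.
  - pose proof PI2_1. unfold Rabs in Hx. destruct (Rcase_abs x); lra.
  - pose proof PI2_1. unfold Rabs in Hx. destruct (Rcase_abs x); lra. }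
destruct (cv_of_bound (tb x k) (fun n => tb_bound x k n Hx')) as [l Hl].
rewrite <- (main_x x Hx' Hc k l Hl).
exact Hl.
Qed.
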